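(* Let $m,n>0$, $h\ge0$ and $\theta>0$, and let $g(u)=\bar\Psi_{m+h,n}\big(\theta\,\bar\Psi_{m,n}^{-1}(u)\big)$ for $u\in(0,1)$. If $\theta\le1$, then $g$ is concave on $(0,1)$; if $\theta>1$ and $h=0$, then $g$ is convex on $(0,1)$.
   Context: $\Psi_{k,n}$ denotes the CDF of $U/W$, where $U\sim\chi^2_k$ and $W\sim\chi^2_n$ are independent (equivalently, of $(k/n)F_{k,n}$); $\bar\Psi_{k,n}=1-\Psi_{k,n}$ and $\bar\Psi_{k,n}^{-1}:(0,1)\to(0,\infty)$ is the inverse of $\bar\Psi_{k,n}$. *)

(* Defs.v *)
From Stdlib Require Import Reals.
From Coquelicot Require Import Coquelicot.
Open Scope R_scope.

(* Unnormalised density of U/W, U ~ chi^2_k, W ~ chi^2_n independent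
   (beta-prime(k/2, n/2) law): t^(k/2-1) (1+t)^(-(k+n)/2) for t > 0. *)
Definition ratio_kernel (k n t : R) : R :=
  Rpower t (k / 2 - 1) * Rpower (1 + t) (- ((k + n) / 2)).

(* Normalising constant  int_0^oo kernel  (= B(k/2, n/2)). *)
Definition ratio_norm (k n : R) : R :=
  RInt_gen (ratio_kernel k n) (at_right 0) (Rbar_locally p_infty).

Definition Psi (k n x : R) : R :=
  RInt_gen (ratio_kernel k n) (at_right 0) (at_point x) / ratio_norm k n.

Definition Psibar (k n x : R) : R := 1 - Psi k n x.

Definition concave_on (a b : R) (f : R -> R) : Prop :=
  forall x y t, a < x < b -> a < y < b -> 0 <= t <= 1 ->
    t * f x + (1 - t) * f y <= f (t * x + (1 - t) * y).

Definition convex_on (a b : R) (f : R -> R) : Prop :=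
  forall x y t, a < x < b -> a < y < b -> 0 <= t <= 1 ->
    f (t * x + (1 - t) * y) <= t * f x + (1 - t) * f y.

(* Main.v *)
Require Import Defs.
From Stdlib Require Import Reals Lra Psatz.
From Coquelicot Require Import Coquelicot.
Open Scope R_scope.


Lemma exp_mono a b : a <= b -> exp a <= exp b.
Proof. intros H; destruct (Req_dec a b) as [->|]; [lra|]. left; apply exp_increasing; lra. Qed.

Lemma Rpower_cont c t : 0 < t -> continuous (fun x => Rpower x c) t.
Proof.
  intros Ht. apply (@ex_derive_continuous R_AbsRing R_NormedModule (fun x => Rpower x c)). exists (c * Rpower t (c - 1)).
  apply is_derive_Reals. apply derivable_pt_lim_power; auto.
Qed.

Lemma K_cont k n t : 0 < t -> continuous (ratio_kernel k n) t.
Proof.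
  intros Ht. unfold ratio_kernel.
  apply (continuous_mult (fun x => Rpower x (k/2-1)) (fun x => Rpower (1+x) (-((k+n)/2)))).
  - apply Rpower_cont; auto.
  - apply (continuous_comp (fun x => 1 + x) (fun x => Rpower x (-((k+n)/2)))).
    + apply (continuous_plus (fun _ => 1) (fun x => x)). apply continuous_const. apply continuous_id.
    + apply Rpower_cont; lra.
Qed.

Lemma K_pos k n t : 0 < ratio_kernel k n t.
Proof. unfold ratio_kernel, Rpower. apply Rmult_lt_0_compat; apply exp_pos. Qed.

Lemma K_exRInt k n a b : 0 < a -> 0 < b -> ex_RInt (ratio_kernel k n) a b.
Proof.
  intros Ha Hb. apply (@ex_RInt_continuous R_CompleteNormedModule). intros z Hz. apply K_cont.
  assert (0 < Rmin a b) by (apply Rmin_pos; auto). lra.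
Qed.

Lemma K_bound0 k n t : 0 < k -> 0 < n -> 0 < t <= 1 -> ratio_kernel k n t <= Rpower t (k/2-1).
Proof.
  intros Hk Hn Ht. unfold ratio_kernel.
  rewrite <- (Rmult_1_r (Rpower t (k/2-1))) at 2.
  apply Rmult_le_compat_l. unfold Rpower; left; apply exp_pos.
  unfold Rpower. apply Rle_trans with (exp 0); [|rewrite exp_0; lra]. apply exp_mono.
  assert (0 <= ln (1+t)) by (rewrite <- ln_1; apply ln_le; lra).
  assert (0 < (k+n)/2) by lra. nra.
Qed.

Lemma K_boundinf k n t : 0 < k -> 0 < n -> 1 <= t -> ratio_kernel k n t <= Rpower t (-(n/2)-1).
Proof.
  intros Hk Hn Ht. unfold ratio_kernel.
  replace (-(n/2)-1) with ((k/2-1) + (-((k+n)/2))) by field.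
  rewrite Rpower_plus. apply Rmult_le_compat_l. unfold Rpower; left; apply exp_pos.
  unfold Rpower. apply exp_mono.
  assert (ln t <= ln (1+t)) by (apply ln_le; lra).
  assert (0 < (k+n)/2) by lra. nra.
Qed.

Lemma RInt_pow p u v : p <> 0 -> 0 < u -> 0 < v ->
  RInt (fun t => Rpower t (p-1)) u v = (Rpower v p - Rpower u p) / p.
Proof.
  intros Hp Hu Hv. apply is_RInt_unique.
  replace ((Rpower v p - Rpower u p) / p) with (minus (Rpower v p / p) (Rpower u p / p))
    by (unfold minus, plus, opp; simpl; field; auto).
  apply (is_RInt_derive (fun t => Rpower t p / p)).
  - intros x Hx. assert (0 < x) by (assert (0 < Rmin u v) by (apply Rmin_pos; auto); lra).
    apply is_derive_Reals.
    replace (Rpower x (p-1)) with ((p * Rpower x (p-1)) / p) by (field; auto).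
    apply (derivable_pt_lim_div_scal (fun t => Rpower t p)).
    apply derivable_pt_lim_power; auto.
  - intros x Hx. assert (0 < x) by (assert (0 < Rmin u v) by (apply Rmin_pos; auto); lra).
    apply Rpower_cont; auto.
Qed.


Definition Phi k n x := RInt (ratio_kernel k n) 1 x.

Lemma Phi_diff k n u v : 0 < u -> 0 < v -> Phi k n v - Phi k n u = RInt (ratio_kernel k n) u v.
Proof.
  intros Hu Hv. unfold Phi.
  rewrite <- (RInt_Chasles (ratio_kernel k n) 1 u v) by (apply K_exRInt; lra).
  unfold plus; simpl; ring.
Qed.

Lemma RInt_K_nonneg k n u v : 0 < u -> u <= v -> 0 <= RInt (ratio_kernel k n) u v.
Proof.
  intros Hu Huv. apply RInt_ge_0; auto. apply K_exRInt; lra.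
  intros; left; apply K_pos.
Qed.

Lemma RInt_K_pos k n u v : 0 < u -> u < v -> 0 < RInt (ratio_kernel k n) u v.
Proof.
  intros Hu Huv. apply RInt_gt_0; auto. intros; apply K_pos.
  intros x Hx. apply K_cont. lra.
Qed.

Lemma Rpower_pos x y : 0 < Rpower x y.
Proof. unfold Rpower; apply exp_pos. Qed.

Lemma Rpower_anti a b c : 0 < a -> a < b -> c < 0 -> Rpower b c < Rpower a c.
Proof.
  intros Ha Hab Hc. unfold Rpower. apply exp_increasing.
  assert (ln a < ln b) by (apply ln_increasing; lra). nra.
Qed.

Lemma Phi_bound0 k n u v : 0 < k -> 0 < n -> 0 < u -> u <= v -> v <= 1 ->
  Phi k n v - Phi k n u <= Rpower v (k/2) / (k/2).
Proof.
  intros Hk Hn Hu Huv Hv. rewrite Phi_diff by lra.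
  apply Rle_trans with (RInt (fun t => Rpower t (k/2-1)) u v).
  - apply RInt_le; auto. apply K_exRInt; lra.
    apply (@ex_RInt_continuous R_CompleteNormedModule). intros z Hz. apply Rpower_cont.
    assert (0 < Rmin u v) by (apply Rmin_pos; lra). lra.
    intros x Hx. apply K_bound0; auto; lra.
  - rewrite RInt_pow by lra. assert (0 < Rpower u (k/2)) by apply Rpower_pos.
    unfold Rdiv. apply Rmult_le_compat_r. left; apply Rinv_0_lt_compat; lra. lra.
Qed.

Lemma Phi_boundinf k n u v : 0 < k -> 0 < n -> 1 <= u -> u <= v ->
  Phi k n v - Phi k n u <= Rpower u (-(n/2)) / (n/2).
Proof.
  intros Hk Hn Hu Huv. rewrite Phi_diff by lra.
  apply Rle_trans with (RInt (fun t => Rpower t (-(n/2)-1)) u v).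
  - apply RInt_le; auto. apply K_exRInt; lra.
    apply (@ex_RInt_continuous R_CompleteNormedModule). intros z Hz. apply Rpower_cont.
    assert (0 < Rmin u v) by (apply Rmin_pos; lra). lra.
    intros x Hx. apply K_boundinf; auto; lra.
  - rewrite RInt_pow by lra. assert (0 < Rpower v (-(n/2))) by apply Rpower_pos.
    replace ((Rpower v (- (n / 2)) - Rpower u (- (n / 2))) / - (n / 2)) with
      ((Rpower u (- (n / 2)) - Rpower v (- (n / 2))) / (n / 2)) by (field; lra).
    unfold Rdiv. apply Rmult_le_compat_r. left; apply Rinv_0_lt_compat; lra. lra.
Qed.

Lemma Phi_mono k n u v : 0 < u -> u <= v -> Phi k n u <= Phi k n v.
Proof. intros. assert (H1 := RInt_K_nonneg k n u v). rewrite <- Phi_diff in H1; lra. Qed.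

Lemma ball_R (x y e : R) : Rabs (y - x) < e -> ball x e y.
Proof. intros H. unfold ball; simpl; unfold AbsRing_ball, abs, minus, plus, opp; simpl. exact H. Qed.

Lemma lim0 k n : 0 < k -> 0 < n -> exists L, filterlim (Phi k n) (at_right 0) (locally L).
Proof.
  intros Hk Hn. apply (filterlim_locally_cauchy (F := at_right 0)).
  intros eps. set (p := k/2). assert (Hp : 0 < p) by (unfold p; lra).
  set (d := Rmin 1 (Rpower (p*eps) (1/p))).
  assert (Hd : 0 < d) by (apply Rmin_pos; [lra | apply Rpower_pos]).
  assert (Hdp : Rpower d p <= p * eps).
  { apply Rle_trans with (Rpower (Rpower (p*eps) (1/p)) p).
    apply Rle_Rpower_l; [lra|]. split; auto. apply Rmin_r.
    rewrite Rpower_mult. replace (1/p*p) with 1 by (field; lra). rewrite Rpower_1.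
    lra. assert (0 < eps) by apply cond_pos. nra. }
  assert (key : forall u v, 0 < u -> u <= v -> v < d -> Rabs (Phi k n v - Phi k n u) < eps).
  { intros u v Hu Huv Hv. assert (Hd1 : d <= 1) by apply Rmin_l.
    assert (H1 := Phi_bound0 k n u v Hk Hn Hu Huv ltac:(lra)).
    assert (H2 := Phi_mono k n u v Hu Huv).
    assert (H3 : Rpower v p < Rpower d p) by (apply Rlt_Rpower_l; lra).
    rewrite Rabs_pos_eq by lra. fold p in H1.
    apply Rle_lt_trans with (Rpower v p / p); auto.
    apply Rmult_lt_reg_r with p; auto. unfold Rdiv. rewrite Rmult_assoc, Rinv_l by lra. lra. }
  exists (fun x => 0 < x < d). split.
  - exists (mkposreal d Hd). intros y Hy Hy0. simpl in Hy.
    unfold ball in Hy; simpl in Hy; unfold AbsRing_ball, abs, minus, plus, opp in Hy; simpl in Hy.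
    rewrite Ropp_0, Rplus_0_r, Rabs_pos_eq in Hy; lra.
  - intros u v Hu Hv. apply ball_R. destruct (Rle_dec u v).
    + apply key; lra.
    + rewrite Rabs_minus_sym. apply key; lra.
Qed.

Lemma liminf k n : 0 < k -> 0 < n -> exists L, filterlim (Phi k n) (Rbar_locally p_infty) (locally L).
Proof.
  intros Hk Hn. apply (filterlim_locally_cauchy (F := Rbar_locally p_infty)).
  intros eps. set (q := n/2). assert (Hq : 0 < q) by (unfold q; lra).
  assert (He : 0 < eps) by apply cond_pos.
  set (M := Rmax 1 (Rpower (q*eps) (-(1/q)))).
  assert (HM1 : 1 <= M) by apply Rmax_l.
  assert (HMq : Rpower M (-q) <= q * eps).
  { apply Rle_trans with (Rpower (Rpower (q*eps) (-(1/q))) (-q)).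
    destruct (Req_dec M (Rpower (q * eps) (- (1 / q)))) as [E|E]. rewrite E; lra.
    left. apply Rpower_anti; [apply Rpower_pos| |lra].
    assert (Rpower (q * eps) (- (1 / q)) <= M) by apply Rmax_r. lra.
    rewrite Rpower_mult. replace (-(1/q)*(-q)) with 1 by (field; lra). rewrite Rpower_1.
    lra. nra. }
  assert (key : forall u v, M < u -> u <= v -> Rabs (Phi k n v - Phi k n u) < eps).
  { intros u v Hu Huv.
    assert (H1 := Phi_boundinf k n u v Hk Hn ltac:(lra) Huv).
    assert (H2 := Phi_mono k n u v ltac:(lra) Huv).
    assert (H3 : Rpower u (-q) < Rpower M (-q)) by (apply Rpower_anti; lra).
    rewrite Rabs_pos_eq by lra. fold q in H1.
    apply Rle_lt_trans with (Rpower u (-q) / q); auto.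
    apply Rmult_lt_reg_r with q; auto. unfold Rdiv. rewrite Rmult_assoc, Rinv_l by lra. lra. }
  exists (fun x => M < x). split.
  - exists M. auto.
  - intros u v Hu Hv. apply ball_R. destruct (Rle_dec u v).
    + apply key; lra.
    + rewrite Rabs_minus_sym. apply key; lra.
Qed.


Lemma Phi_derive k n x : 0 < x -> is_derive (Phi k n) x (ratio_kernel k n x).
Proof.
  intros Hx. unfold Phi.
  apply (is_derive_RInt (V := R_NormedModule) (ratio_kernel k n) (RInt (ratio_kernel k n) 1) 1 x).
  - assert (He : 0 < x/2) by lra. exists (mkposreal _ He). intros y Hy.
    unfold ball in Hy; simpl in Hy; unfold AbsRing_ball, abs, minus, plus, opp in Hy; simpl in Hy.
    apply Rabs_def2 in Hy. apply (RInt_correct (V := R_CompleteNormedModule)).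
    apply K_exRInt; lra.
  - apply K_cont; auto.
Qed.

Lemma DPhi k n x : 0 < x -> Derive (Phi k n) x = ratio_kernel k n x.
Proof. intros; apply is_derive_unique, Phi_derive; auto. Qed.

Lemma DPhi_cont k n x : 0 < x -> continuous (Derive (Phi k n)) x.
Proof.
  intros Hx. apply (continuous_ext_loc _ (ratio_kernel k n)).
  - assert (He : 0 < x/2) by lra. exists (mkposreal _ He). intros y Hy.
    unfold ball in Hy; simpl in Hy; unfold AbsRing_ball, abs, minus, plus, opp in Hy; simpl in Hy.
    apply Rabs_def2 in Hy. rewrite DPhi; auto; lra.
  - apply K_cont; auto.
Qed.

Lemma at_right0_pos : at_right 0 (fun a => 0 < a).
Proof. exists (mkposreal 1 Rlt_0_1). intros; auto. Qed.

Lemma gen_general k n (Fb : (R -> Prop) -> Prop) (FF : Filter Fb) L0 Lb :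
  filterlim (Phi k n) (at_right 0) (locally L0) ->
  filterlim (Phi k n) Fb (locally Lb) -> Fb (fun b => 0 < b) ->
  is_RInt_gen (ratio_kernel k n) (at_right 0) Fb (Lb - L0).
Proof.
  intros H0 Hb Fpos.
  assert (Hprod : filter_prod (at_right 0) Fb (fun ab => 0 < fst ab /\ 0 < snd ab)).
  { apply (Filter_prod _ _ _ (fun a => 0 < a) (fun b => 0 < b)); auto. apply at_right0_pos. }
  apply (is_RInt_gen_ext (Derive (Phi k n))).
  - eapply filter_imp; [|exact Hprod]. intros [a b] [Ha Hb'] x Hx. simpl in *.
    apply DPhi. assert (0 < Rmin a b) by (apply Rmin_pos; auto). lra.
  - apply is_RInt_gen_Derive; auto.
    + eapply filter_imp; [|exact Hprod]. intros [a b] [Ha Hb'] x Hx. simpl in *.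
      exists (ratio_kernel k n x). apply Phi_derive. assert (0 < Rmin a b) by (apply Rmin_pos; auto). lra.
    + eapply filter_imp; [|exact Hprod]. intros [a b] [Ha Hb'] x Hx. simpl in *.
      apply DPhi_cont. assert (0 < Rmin a b) by (apply Rmin_pos; auto). lra.
Qed.


Lemma Psibar_diff k n : 0 < k -> 0 < n -> exists N, 0 < N /\
  forall x y, 0 < x -> 0 < y -> Psibar k n x - Psibar k n y = RInt (ratio_kernel k n) x y / N.
Proof.
  intros Hk Hn.
  destruct (lim0 k n Hk Hn) as [L0 H0]. destruct (liminf k n Hk Hn) as [L1 H1].
  assert (HN : ratio_norm k n = L1 - L0).
  { unfold ratio_norm. apply (is_RInt_gen_unique (V := R_CompleteNormedModule)
      (Fa := at_right 0) (Fb := Rbar_locally p_infty)).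
    apply gen_general; auto. apply Rbar_locally_filter. exists 0; auto. }
  assert (HP : forall x, 0 < x -> RInt_gen (ratio_kernel k n) (at_right 0) (at_point x) = Phi k n x - L0).
  { intros x Hx.
    assert (PP : ProperFilter' (at_point x)).
    { apply Proper_StrongProper, at_point_filter. }
    apply (@is_RInt_gen_unique R_CompleteNormedModule (at_right 0) (at_point x) _ PP).
    apply (gen_general k n (at_point x) (@filter_filter' _ _ PP)); auto.
    intros P HPx. exact (locally_singleton _ _ HPx).
    }
  assert (Hl0 : L0 <= Phi k n (1/2)).
  { cut (Rbar_le L0 (Phi k n (1/2))); [simpl; auto|].
    apply (filterlim_le (F := at_right 0) (Phi k n) (fun _ => Phi k n (1/2)) L0 (Phi k n (1/2))); auto.
    - exists (mkposreal (1/2) ltac:(lra)). intros y Hy Hy0.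
      unfold ball in Hy; simpl in Hy; unfold AbsRing_ball, abs, minus, plus, opp in Hy; simpl in Hy.
      rewrite Ropp_0, Rplus_0_r, Rabs_pos_eq in Hy by lra. apply Phi_mono; lra.
    - apply filterlim_const. }
  assert (Hl1 : Phi k n 1 <= L1).
  { cut (Rbar_le (Phi k n 1) L1); [simpl; auto|].
    apply (filterlim_le (F := Rbar_locally p_infty) (fun _ => Phi k n 1) (Phi k n) (Phi k n 1) L1); auto.
    - exists 1. intros y Hy. apply Phi_mono; lra.
    - apply filterlim_const. }
  assert (Hs : Phi k n (1/2) < Phi k n 1).
  { assert (R := RInt_K_pos k n (1/2) 1 ltac:(lra) ltac:(lra)). rewrite <- Phi_diff in R; lra. }
  exists (L1 - L0). split. lra.
  intros x y Hx Hy. unfold Psibar, Psi. rewrite HN, !HP by auto.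
  rewrite <- Phi_diff by auto. field. lra.
Qed.


Lemma concave_from_slopes (g : R -> R) :
  (forall u1 u2 u3, 0 < u1 -> u1 < u2 -> u2 < u3 -> u3 < 1 ->
     exists r, r * (u2 - u1) <= g u2 - g u1 /\ g u3 - g u2 <= r * (u3 - u2)) ->
  concave_on 0 1 g.
Proof.
  intros H.
  assert (K : forall x y t, 0 < x < 1 -> 0 < y < 1 -> 0 < t < 1 -> x < y ->
     t * g x + (1 - t) * g y <= g (t * x + (1 - t) * y)).
  { intros x y t Hx Hy Ht Hxy. set (z := t * x + (1 - t) * y).
    assert (Hz1 : x < z) by (unfold z; nra). assert (Hz2 : z < y) by (unfold z; nra).
    destruct (H x z y) as [r [H1 H2]]; try lra.
    assert (E1 : z - x = (1 - t) * (y - x)) by (unfold z; ring).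
    assert (E2 : y - z = t * (y - x)) by (unfold z; ring).
    rewrite E1 in H1. rewrite E2 in H2.
    assert (A1 := Rmult_le_compat_l t _ _ ltac:(lra) H1).
    assert (A2 := Rmult_le_compat_l (1-t) _ _ ltac:(lra) H2).
    assert (t * (r * ((1 - t) * (y - x))) = (1-t) * (r * (t * (y - x)))) by ring.
    nra. }
  intros x y t Hx Hy Ht.
  destruct (Req_dec t 0) as [->|Ht0]. replace (0*x+(1-0)*y) with y by ring. lra.
  destruct (Req_dec t 1) as [->|Ht1]. replace (1*x+(1-1)*y) with x by ring. lra.
  destruct (Rtotal_order x y) as [Hxy|[Hxy|Hxy]].
  - apply K; auto; lra.
  - subst y. replace (t*x+(1-t)*x) with x by ring. lra.
  - replace (t * x + (1 - t) * y) with ((1-t) * y + (1 - (1-t)) * x) by ring.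
    replace (t * g x + (1 - t) * g y) with ((1-t) * g y + (1 - (1-t)) * g x) by ring.
    apply K; auto; lra.
Qed.

Lemma K_exp k n t : ratio_kernel k n t = exp ((k/2-1) * ln t + (-((k+n)/2)) * ln (1+t)).
Proof. unfold ratio_kernel, Rpower. rewrite exp_plus. f_equal; f_equal; ring. Qed.

Lemma kern_ineq m n h th s t : 0 < m -> 0 < n -> 0 <= h -> 0 < th -> 0 < s -> s <= t ->
  (th <= 1 -> ratio_kernel (m+h) n (th*s) * ratio_kernel m n t <= ratio_kernel (m+h) n (th*t) * ratio_kernel m n s) /\
  (1 < th -> h = 0 -> ratio_kernel (m+h) n (th*t) * ratio_kernel m n s <= ratio_kernel (m+h) n (th*s) * ratio_kernel m n t).
Proof.
  intros Hm Hn Hh Hth Hs Hst.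
  rewrite !K_exp, <- !exp_plus.
  rewrite (ln_mult th s), (ln_mult th t) by lra.
  assert (F1 : ln s + ln (1 + th * t) <= ln t + ln (1 + th * s)).
  { rewrite <- !ln_mult by nra. apply ln_le.
    apply Rmult_lt_0_compat; nra.
    assert (0 <= t - s) by lra. nra. }
  split; intros Hth1; [|intros Hh0; subst h]; apply exp_mono.
  - assert (F2 : ln (1 + s) + ln (1 + th * t) <= ln (1 + t) + ln (1 + th * s)).
    { rewrite <- !ln_mult by nra. apply ln_le.
      apply Rmult_lt_0_compat; nra.
      assert (0 <= t - s) by lra. assert (0 <= 1 - th) by lra. nra. }
    set (A := ln t + ln (1 + th * s) - (ln s + ln (1 + th * t))).
    set (C := ln (1 + t) + ln (1 + th * s) - (ln (1 + s) + ln (1 + th * t))).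
    assert (0 <= h/2 * A) by (apply Rmult_le_pos; unfold A; lra).
    assert (0 <= (m+n)/2 * C) by (apply Rmult_le_pos; unfold C; lra).
    unfold A, C in *. nra.
  - assert (F2 : ln (1 + t) + ln (1 + th * s) <= ln (1 + s) + ln (1 + th * t)).
    { rewrite <- !ln_mult by nra. apply ln_le.
      apply Rmult_lt_0_compat; nra.
      assert (0 <= t - s) by lra. assert (0 <= th - 1) by lra. nra. }
    set (C := ln (1 + s) + ln (1 + th * t) - (ln (1 + t) + ln (1 + th * s))).
    assert (0 <= (m+n)/2 * C) by (apply Rmult_le_pos; unfold C; lra).
    unfold C in *. nra.
Qed.


Lemma RInt_scal_R f a b l : ex_RInt f a b -> RInt (fun x => l * f x) a b = l * RInt f a b.
Proof. intros H. exact (RInt_scal f a b l H). Qed.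

Lemma Kth_cont k n th t : 0 < th -> 0 < t -> continuous (fun t => th * ratio_kernel k n (th * t)) t.
Proof.
  intros Hth Ht.
  apply (continuous_mult (fun _ => th) (fun t => ratio_kernel k n (th * t))).
  apply continuous_const.
  apply (continuous_comp (fun t => th * t) (ratio_kernel k n)).
  apply (continuous_mult (fun _ => th) (fun t => t)). apply continuous_const. apply continuous_id.
  apply K_cont. nra.
Qed.

Lemma Kth_ex k n th a b : 0 < th -> 0 < a -> 0 < b -> ex_RInt (fun t => th * ratio_kernel k n (th * t)) a b.
Proof.
  intros Hth Ha Hb. apply (@ex_RInt_continuous R_CompleteNormedModule). intros z Hz.
  apply Kth_cont; auto. assert (0 < Rmin a b) by (apply Rmin_pos; auto). lra.
Qed.

Lemma J_eq k n th a b : 0 < th -> 0 < a -> 0 < b ->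
  RInt (ratio_kernel k n) (th*a) (th*b) = RInt (fun t => th * ratio_kernel k n (th * t)) a b.
Proof.
  intros Hth Ha Hb.
  transitivity (RInt (fun y => scal th (ratio_kernel k n (th*y+0))) a b).
  - rewrite (RInt_comp_lin (V := R_CompleteNormedModule)). rewrite !Rplus_0_r; reflexivity.
    rewrite !Rplus_0_r. apply K_exRInt; nra.
  - apply RInt_ext. intros x _. rewrite Rplus_0_r. reflexivity.
Qed.

Lemma slope m n h th (X : R -> R) Nm Nb s :
  0 < m -> 0 < n -> 0 <= h -> 0 < th -> 0 < Nm -> 0 < Nb ->
  (forall x y, 0 < x -> 0 < y -> Psibar m n x - Psibar m n y = RInt (ratio_kernel m n) x y / Nm) ->
  (forall x y, 0 < x -> 0 < y -> Psibar (m+h) n x - Psibar (m+h) n y = RInt (ratio_kernel (m+h) n) x y / Nb) ->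
  (forall u, 0 < u < 1 -> 0 < X u /\ Psibar m n (X u) = u) ->
  (forall a b, 0 < a -> a <= b -> s * (ratio_kernel (m+h) n (th*a) * ratio_kernel m n b)
        <= s * (ratio_kernel (m+h) n (th*b) * ratio_kernel m n a)) ->
  forall u1 u2 u3, 0 < u1 -> u1 < u2 -> u2 < u3 -> u3 < 1 ->
  exists r, r * (u2 - u1) <= s * (Psibar (m+h) n (th * X u2) - Psibar (m+h) n (th * X u1)) /\
            s * (Psibar (m+h) n (th * X u3) - Psibar (m+h) n (th * X u2)) <= r * (u3 - u2).
Proof.
  intros Hm Hn Hh Hth HNm HNb HFm HFb HX Hs u1 u2 u3 H1 H12 H23 H3.
  assert (ord : forall u v, 0 < u -> u < v -> v < 1 -> X v < X u).
  { intros u v Hu Huv Hv. destruct (HX u ltac:(lra)) as [Xu Fu]. destruct (HX v ltac:(lra)) as [Xv Fv].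
    destruct (Rlt_or_le (X v) (X u)) as [|Hle]; auto.
    assert (E := HFm (X u) (X v) Xu Xv). rewrite Fu, Fv in E.
    assert (0 <= RInt (ratio_kernel m n) (X u) (X v) / Nm).
    { apply Rdiv_le_0_compat; auto. apply RInt_K_nonneg; auto. }
    lra. }
  destruct (HX u1 ltac:(lra)) as [X1 F1]. destruct (HX u2 ltac:(lra)) as [X2 F2].
  destruct (HX u3 ltac:(lra)) as [X3 F3].
  assert (O12 := ord u1 u2 ltac:(lra) H12 ltac:(lra)).
  assert (O23 := ord u2 u3 ltac:(lra) H23 ltac:(lra)).
  set (x1 := X u1) in *. set (x2 := X u2) in *. set (x3 := X u3) in *.
  assert (Kx2 := K_pos m n x2).
  set (c := th * ratio_kernel (m+h) n (th*x2) / ratio_kernel m n x2).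
  assert (Eu12 : u2 - u1 = RInt (ratio_kernel m n) x2 x1 / Nm).
  { rewrite <- F1, <- F2. apply HFm; auto. }
  assert (Eu23 : u3 - u2 = RInt (ratio_kernel m n) x3 x2 / Nm).
  { rewrite <- F3, <- F2. apply HFm; auto. }
  rewrite !HFb by nra. rewrite !J_eq by auto.
  set (Jf := fun t => th * ratio_kernel (m+h) n (th * t)).
  assert (C1 : s * c * RInt (ratio_kernel m n) x2 x1 <= s * RInt Jf x2 x1).
  { rewrite <- RInt_scal_R by (apply K_exRInt; auto). unfold Jf. rewrite <- RInt_scal_R by (apply Kth_ex; auto).
    apply RInt_le. lra.
    apply (ex_RInt_scal (V := R_CompleteNormedModule) (ratio_kernel m n) x2 x1 (s*c)); apply K_exRInt; auto.
    apply (ex_RInt_scal (V := R_CompleteNormedModule) _ x2 x1 s); apply Kth_ex; auto.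
    intros t Ht. assert (Hk := Hs x2 t X2 ltac:(lra)).
    unfold c. replace (s * (th * ratio_kernel (m + h) n (th * x2) / ratio_kernel m n x2) * ratio_kernel m n t)
      with ((th / ratio_kernel m n x2) * (s * (ratio_kernel (m + h) n (th * x2) * ratio_kernel m n t))) by (field; lra).
    replace (s * (th * ratio_kernel (m + h) n (th * t))) with
      ((th / ratio_kernel m n x2) * (s * (ratio_kernel (m + h) n (th * t) * ratio_kernel m n x2))) by (field; lra).
    apply Rmult_le_compat_l; auto. left; apply Rdiv_lt_0_compat; auto. }
  assert (C2 : s * RInt Jf x3 x2 <= s * c * RInt (ratio_kernel m n) x3 x2).
  { rewrite <- (RInt_scal_R (ratio_kernel m n) x3 x2 (s*c)) by (apply K_exRInt; auto).
    rewrite <- (RInt_scal_R Jf x3 x2 s) by (apply Kth_ex; auto). unfold Jf.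
    apply RInt_le. lra.
    apply (ex_RInt_scal (V := R_CompleteNormedModule) _ x3 x2 s); apply Kth_ex; auto.
    apply (ex_RInt_scal (V := R_CompleteNormedModule) (ratio_kernel m n) x3 x2 (s*c)); apply K_exRInt; auto.
    intros t Ht. assert (Hk := Hs t x2 ltac:(lra) ltac:(lra)).
    unfold c. replace (s * (th * ratio_kernel (m + h) n (th * x2) / ratio_kernel m n x2) * ratio_kernel m n t)
      with ((th / ratio_kernel m n x2) * (s * (ratio_kernel (m + h) n (th * x2) * ratio_kernel m n t))) by (field; lra).
    replace (s * (th * ratio_kernel (m + h) n (th * t))) with
      ((th / ratio_kernel m n x2) * (s * (ratio_kernel (m + h) n (th * t) * ratio_kernel m n x2))) by (field; lra).
    apply Rmult_le_compat_l; auto. left; apply Rdiv_lt_0_compat; auto. }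
  exists (s * c * Nm / Nb). rewrite Eu12, Eu23. fold Jf. split.
  - replace (s * c * Nm / Nb * (RInt (ratio_kernel m n) x2 x1 / Nm)) with
      ((s * c * RInt (ratio_kernel m n) x2 x1) / Nb) by (field; lra).
    replace (s * (RInt Jf x2 x1 / Nb)) with ((s * RInt Jf x2 x1) / Nb) by (field; lra).
    unfold Rdiv. apply Rmult_le_compat_r; auto. left; apply Rinv_0_lt_compat; auto.
  - replace (s * c * Nm / Nb * (RInt (ratio_kernel m n) x3 x2 / Nm)) with
      ((s * c * RInt (ratio_kernel m n) x3 x2) / Nb) by (field; lra).
    replace (s * (RInt Jf x3 x2 / Nb)) with ((s * RInt Jf x3 x2) / Nb) by (field; lra).
    unfold Rdiv. apply Rmult_le_compat_r; auto. left; apply Rinv_0_lt_compat; auto.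
Qed.


Theorem mainTheorem7 (m n h theta : R) (Psibar_inv : R -> R) :
  0 < m -> 0 < n -> 0 <= h -> 0 < theta ->
  (forall u, 0 < u < 1 -> 0 < Psibar_inv u /\ Psibar m n (Psibar_inv u) = u) ->
  let g := fun u => Psibar (m + h) n (theta * Psibar_inv u) in
  (theta <= 1 -> concave_on 0 1 g) /\
  (1 < theta -> h = 0 -> convex_on 0 1 g).
Proof.
  intros Hm Hn Hh Hth HX g.
  destruct (Psibar_diff m n Hm Hn) as [Nm [HNm HFm]].
  destruct (Psibar_diff (m+h) n ltac:(lra) Hn) as [Nb [HNb HFb]].
  split.
  - intros Hth1. apply concave_from_slopes. intros u1 u2 u3 H1 H12 H23 H3.
    destruct (slope m n h theta Psibar_inv Nm Nb 1 Hm Hn Hh Hth HNm HNb HFm HFb HX) with u1 u2 u3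
      as [r [A B]]; auto.
    + intros a b Ha Hab. rewrite !Rmult_1_l. apply (kern_ineq m n h theta a b); auto.
    + exists r. unfold g. lra.
  - intros Hth1 Hh0.
    assert (C : concave_on 0 1 (fun u => - g u)).
    { apply concave_from_slopes. intros u1 u2 u3 H1 H12 H23 H3.
      destruct (slope m n h theta Psibar_inv Nm Nb (-1) Hm Hn Hh Hth HNm HNb HFm HFb HX) with u1 u2 u3
        as [r [A B]]; auto.
      + intros a b Ha Hab. assert (K := proj2 (kern_ineq m n h theta a b Hm Hn Hh Hth Ha Hab) Hth1 Hh0). lra.
      + exists r. unfold g. lra. }
    intros x y t Hx Hy Ht. specialize (C x y t Hx Hy Ht). simpl in C. lra.
Qed.
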